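(* Assume $\gamma^{(l)}_i>0$ for all $l,i$. Fix $m\ge1$, a neuron $j$ of layer $m$, a label $q$, and set $u=s^{(m)}_{j,q}$. Then for every $0\le l\le m$, neuron $i$ of layer $l$, and $p,k\in\{+,-\}$: (1) $\dfrac{\partial a^{(m,p\oplus q)}_{\mathrm{stop},j}}{\partial a^{(l,k)}_{\mathrm{stop},i}}=\Gamma_u(s^{(l)}_{i,p\oplus k})$, where the derivative is taken of the affine map sending the layer-$l$ pair $(a^{(l,+)}_{\mathrm{stop}},a^{(l,-)}_{\mathrm{stop}})$ (treated as free variables) to the layer-$m$ pair via the Stopping Decomposition recursion with all gate factors $\mathbf 1[z^{(l')}_{h}>0]$, $l<l'\le m$, frozen at their values at $x$; (2) $J_{ji}=\xi_{q,+}\bigl(\Gamma_u(s^{(l)}_{i,+})-\Gamma_u(s^{(l)}_{i,-})\bigr)$, where $J=D^{(m)}W^{(m)}D^{(m-1)}W^{(m-1)}\cdots D^{(l+1)}W^{(l+1)}$ (identity if $l=m$) with $D^{(l')}=\mathrm{diag}(\mathbf 1[z^{(l')}>0])$, i.e. $J_{ji}=\partial a^{(m)}_j/\partial a^{(l)}_i$ with the convention $\mathrm{ReLU}'(0)=0$.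
   Context: ReLU network: $a^{(0)}=x$, $z^{(l)}=b^{(l)}+W^{(l)}a^{(l-1)}$, $a^{(l)}=\mathrm{ReLU}(z^{(l)})$; $W^{(l,\pm)}=(W^{(l)})^\pm$, $b^{(l,\pm)}=(b^{(l)})^\pm$ entrywise, $u^\pm=\max(\pm u,0)$. Stopping Decomposition: $a^{(0,\pm)}_{\mathrm{stop},k}=x^\pm_k$, $z^{(l,+)}_i=b^{(l,+)}_i+\sum_hW^{(l,+)}_{ih}a^{(l-1,+)}_{\mathrm{stop},h}+\sum_hW^{(l,-)}_{ih}a^{(l-1,-)}_{\mathrm{stop},h}$, $z^{(l,-)}_i=b^{(l,-)}_i+\sum_hW^{(l,+)}_{ih}a^{(l-1,-)}_{\mathrm{stop},h}+\sum_hW^{(l,-)}_{ih}a^{(l-1,+)}_{\mathrm{stop},h}$, $a^{(l,\pm)}_{\mathrm{stop},i}=\mathbf 1[z^{(l)}_i>0]\,z^{(l,\pm)}_i$. Labels $p,q,r,k\in\{+,-\}$; $p\oplus q=+$ if $p=q$, else $-$; $\xi_{p,q}=1$ if $p=q$, else $-1$. Stopping-Game chain: states $s^{(l)}_{i,r}$ ($0\le l\le L$) plus a cemetery $\perp$. From $s^{(l)}_{i,r}$ with $l\ge1$: if $z^{(l)}_i\le0$ go to $\perp$ (discount factor irrelevant); if $z^{(l)}_i>0$ go to $s^{(l-1)}_{h,r'}$ with probability $W^{(l,r\oplus r')}_{ih}/\gamma^{(l)}_i$, where $\gamma^{(l)}_i=\sum_h|W^{(l)}_{ih}|$, with discount factor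 $\gamma^{(l)}_i$. States at layer $0$ and $\perp$ are absorbing/terminal. For a trajectory $\tau=(\tau_0=u,\tau_1,\dots)$ define the cumulative discount $d_0=1$, $d_t=\prod_{m'<t}\gamma(\tau_{m'})$ where $\gamma(\tau_{m'})$ is the discount factor of the continuation taken at $\tau_{m'}$. The discounted occupation measure is $\Gamma_u(v)=\mathbb{E}[\sum_t d_t\mathbf 1\{\tau_t=v\}]$. *)

(* Defs.v *)
From HB Require Import structures.
From mathcomp Require Import all_boot all_order all_algebra.
From mathcomp Require Import all_classical all_reals all_analysis.
Set Implicit Arguments. Unset Strict Implicit. Unset Printing Implicit Defensive.
Import Order.TTheory GRing.Theory Num.Theory.
Import numFieldNormedType.Exports.
Local Open Scope ring_scope.

(* Conventions:
   - layers 0..L, width of layer l is [n l]; neurons of layer l are the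
     naturals i < n l (entries outside these ranges are never used);
   - [W l i h] = W^{(l)}_{ih} (l >= 1, i < n l, h < n (l-1)), [b l i] = b^{(l)}_i,
     [x k] = x_k (k < n 0);
   - labels p,q,r,k in {+,-} are booleans, [true] = +, [false] = -. *)

Definition relu {R : realType} (u : R) : R := Num.max u 0.
Definition ppart {R : realType} (u : R) : R := Num.max u 0.
Definition npart {R : realType} (u : R) : R := Num.max (- u) 0.
Definition sgpart {R : realType} (r : bool) (u : R) : R :=
  if r then ppart u else npart u.

Definition oplus (p q : bool) : bool := p == q.
Definition xi {R : realType} (p q : bool) : R := if p == q then 1 else -1.

Section ReLUNet.
Variable R : realType.
Variable L : nat.
Variable n : nat -> nat.
Variable W : nat -> nat -> nat -> R.
Variable b : nat -> nat -> R.
Variable x : nat -> R.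

Fixpoint act (l : nat) : nat -> R :=
  match l with
  | 0 => x
  | l'.+1 => fun i => relu (b l'.+1 i + \sum_(h < n l') W l'.+1 i h * act l' h)
  end.

Definition preact (l i : nat) : R :=
  b l i + \sum_(h < n l.-1) W l i h * act l.-1 h.

Definition gate (l i : nat) : R := if 0 < preact l i then 1 else 0.

Definition gam (l i : nat) : R := \sum_(h < n l.-1) `|W l i h|.

(* One step of the Stopping Decomposition at layer l (gate frozen at its
   value at x), applied to a layer-(l-1) pair A (A true = a^+, A false = a^-). *)
Definition stop_step (l : nat) (A : bool -> nat -> R) : bool -> nat -> R :=
  fun r i => gate l i *
    (sgpart r (b l i)
     + \sum_(h < n l.-1) sgpart true (W l i h) * A r h
     + \sum_(h < n l.-1) sgpart false (W l i h) * A (~~ r) h).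

Fixpoint stop_from (l : nat) (A : bool -> nat -> R) (m : nat) : bool -> nat -> R :=
  match m with
  | 0 => A
  | m'.+1 => if (m'.+1 <= l)%N then A else stop_step m'.+1 (stop_from l A m')
  end.

Definition a_stop (l : nat) : bool -> nat -> R :=
  stop_from 0 (fun r k => sgpart r (x k)) l.

Definition shift_pair (A : bool -> nat -> R) (k : bool) (i : nat) (t : R) :
    bool -> nat -> R :=
  fun r h => if (r == k) && (h == i) then A r h + t else A r h.

Fixpoint jac (l m : nat) : nat -> nat -> R :=
  match m with
  | 0 => fun j i => (j == i)%:R
  | m'.+1 => if (m'.+1 <= l)%N then fun j i => (j == i)%:R
             else fun j i => gate m'.+1 j * \sum_(h < n m') W m'.+1 j h * jac l m' h i
  end.

(* Stopping-game chain. States: Some (l, i, r) = s^{(l)}_{i,r}; None = cemetery. *)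
Definition state := option (nat * nat * bool).

Definition states : seq state :=
  None :: flatten [seq flatten [seq [:: Some (l, i, true); Some (l, i, false)]
                               | i <- iota 0 (n l)]
                  | l <- iota 0 L.+1].

Definition trans (s s' : state) : R :=
  match s with
  | None => 0
  | Some (l, i, r) =>
      if l is 0 then 0 else
      if 0 < preact l i then
        match s' with
        | None => 0
        | Some (l', h, r') =>
            if (l' == l.-1) && (h < n l.-1)%N
            then sgpart (oplus r r') (W l i h) / gam l i else 0
        end
      else (if s' is None then 1 else 0)
  end.

(* discount factor of the continuation taken at s (only relevant when a
   transition with positive probability is taken from s) *)
Definition disc (s : state) : R :=
  match s with
  | Some (l, i, _) => if 0 < preact l i then gam l i else 1
  | None => 1
  end.

(* E_s[ d_t 1{tau_t = v} ]  (sum over all trajectories of length t from s) *)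
Fixpoint occ_t (t : nat) (s v : state) : R :=
  match t with
  | 0 => (s == v)%:R
  | t'.+1 => \sum_(s' <- states) trans s s' * disc s * occ_t t' s' v
  end.

Definition Gamma (u v : state) : R := limn (fun N => \sum_(t < N) occ_t t u v).

End ReLUNet.

(* Main.v *)
Require Import Defs.
From HB Require Import structures.
From mathcomp Require Import all_boot all_order all_algebra.
From mathcomp Require Import all_classical all_reals all_analysis.
From mathcomp Require Import ring lra zify.
Import Order.TTheory GRing.Theory Num.Theory.
Import numFieldNormedType.Exports.
Local Open Scope ring_scope.

Lemma aff_derive (R : realType) (C D : R) :
  is_derive (0:R) (1:R) (fun t : R => C + t * D) D.
Proof.
have h := is_deriveD (is_derive_cst C (0:R) (1:R))
  (is_deriveZ D (is_derive_id (0:R) (1:R))).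
have -> : (fun t : R => C + t * D) = (cst C + D \*: id)
  by apply/funext => t /=; rewrite mulrC.
move: h; rewrite add0r; by rewrite [_ *: _]mulr1.
Qed.

Lemma sgpartB {R : realType} (u : R) : sgpart true u - sgpart false u = u.
Proof.
rewrite /sgpart /ppart /npart /Num.max.
case: ifP => h1; case: ifP => h2; lra.
Qed.

Lemma negb_oplus p q : ~~ oplus p q = oplus p (~~ q).
Proof. by case: p; case: q. Qed.

Section Proof.
Variable R : realType.
Variable L : nat.
Variable n : nat -> nat.
Variable W : nat -> nat -> nat -> R.
Variable b : nat -> nat -> R.
Variable x : nat -> R.
Hypothesis hgam : forall l i : nat, (1 <= l <= L)%N -> (i < n l)%N -> 0 < gam n W l i.

Local Notation occ := (occ_t L n W b x).
Local Notation Gam := (Gamma L n W b x).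

Lemma occ_None t v : v != None -> occ t None v = 0.
Proof.
case: t => [|t] hv /=; first by rewrite eq_sym (negbTE hv).
by rewrite big1 // => s _; rewrite /trans !mul0r.
Qed.

Lemma occ_layer t l' j q l i c : (t + l != l')%N ->
  occ t (Some (l', j, q)) (Some (l, i, c)) = 0.
Proof.
elim: t l' j q => [|t IH] l' j q h /=.
  suff -> : (Some (l', j, q) == Some (l, i, c)) = false by [].
  apply/negbTE; apply: contra h => /eqP [-> _ _]; by rewrite add0n.
apply: big1 => s _; rewrite /trans.
case: l' h => [|l'] h; first by rewrite !mul0r.
case: ifP => hp.
  case: s => [[[l2 h2] r']|]; last by rewrite !mul0r.
  case: ifP => hc; last by rewrite !mul0r.
  move: hc => /andP [/eqP -> _].
  by rewrite IH ?mulr0 //; rewrite addSn eqSS in h.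
case: s => [[[l2 h2] r']|]; first by rewrite !mul0r.
by rewrite occ_None ?mulr0.
Qed.

Lemma Gamma_eq l' j q l i c : (l <= l')%N ->
  Gam (Some (l', j, q)) (Some (l, i, c)) = occ (l' - l) (Some (l', j, q)) (Some (l, i, c)).
Proof.
move=> hl; rewrite /Gamma; apply: lim_near_cst => //.
exists (l' - l).+1 => // N /= hN.
rewrite (bigD1 (Ordinal hN)) //= big1 ?addr0 // => t ht.
apply: occ_layer; apply: contra ht => /eqP ht.
apply/eqP; apply: val_inj => /=; lia.
Qed.


Lemma occ_step t l' j q l i c : (1 <= l' <= L)%N -> (j < n l')%N ->
  occ t.+1 (Some (l', j, q)) (Some (l, i, c)) =
  gate n W b x l' j * \sum_(h < n l'.-1)
    (sgpart true (W l' j h) * occ t (Some (l'.-1, (h : nat), q)) (Some (l, i, c))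
     + sgpart false (W l' j h) * occ t (Some (l'.-1, (h : nat), ~~ q)) (Some (l, i, c))).
Proof.
move=> hl hj; have hg := hgam _ _ hl hj.
case: l' hl hj hg => [|l'] // hl hj hg /=.
rewrite /gate; case: ifP => hp; last first.
  rewrite mul0r; apply: big1 => s _.
  case: s => [[[l2 h2] r']|]; first by rewrite !mul0r.
  by rewrite occ_None ?mulr0.
rewrite mul1r /states big_cons !mul0r add0r.
rewrite big_flatten big_map.
have hm : l' \in iota 0 L.+1 by rewrite mem_iota; move: hl => /andP [_ hl]; lia.
rewrite (bigD1_seq l') ?iota_uniq //= [X in _ + X]big1 ?addr0; last first.
  move=> l2 hl2; rewrite big_flatten big_map big1 // => h _.
  by rewrite !big_cons big_nil /= (negbTE hl2) /= !mul0r !Monoid.simpm.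
rewrite big_flatten big_map.
have -> : iota 0 (n l') = index_iota 0 (n l') by rewrite /index_iota subn0.
rewrite big_mkord; apply: eq_bigr => h _.
rewrite !big_cons big_nil /= eqxx ltn_ord /= Monoid.simpm.
rewrite !divfK ?gt_eqF //.
rewrite [LHS]/= addr0; case: q => /=; [by [] | exact: addrC].
Qed.

Definition Fv (l i : nat) (c : bool) (m' j : nat) (q : bool) : R :=
  Gam (Some (m', j, q)) (Some (l, i, c)).

Lemma F_base l i c j q : Fv l i c l j q = ((j == i) && (q == c))%:R.
Proof.
rewrite /Fv Gamma_eq // subnn /=.
have -> : (Some (l,j,q) == Some (l,i,c)) = ((l,j,q) == (l,i,c)) by [].
by rewrite !xpair_eqE eqxx.
Qed.

Lemma F_step l i c m' j q : (l < m')%N -> (m' <= L)%N -> (j < n m')%N ->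
  Fv l i c m' j q = gate n W b x m' j * \sum_(h < n m'.-1)
    (sgpart true (W m' j h) * Fv l i c m'.-1 h q
     + sgpart false (W m' j h) * Fv l i c m'.-1 h (~~ q)).
Proof.
move=> hl hL hj; rewrite /Fv Gamma_eq ?(ltnW hl) //.
have -> : (m' - l = (m'.-1 - l).+1)%N by lia.
rewrite occ_step //; last by apply/andP; split => //; lia.
congr (_ * _); apply: eq_bigr => h _.
by rewrite !Gamma_eq //; lia.
Qed.

Lemma stop_from_le l A m : (m <= l)%N -> stop_from n W b x l A m = A.
Proof. by case: m => //= m ->. Qed.

Lemma stop_from_S l A m : (l <= m)%N ->
  stop_from n W b x l A m.+1 = stop_step n W b x m.+1 (stop_from n W b x l A m).
Proof. by move=> h /=; rewrite ifN // -ltnNge ltnS. Qed.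

Lemma jac_le l m j i : (m <= l)%N -> jac n W b x l m j i = (j == i)%:R.
Proof. by case: m => //= m ->. Qed.

Lemma jac_S l m j i : (l <= m)%N ->
  jac n W b x l m.+1 j i = gate n W b x m.+1 j * \sum_(h < n m) W m.+1 j h * jac n W b x l m h i.
Proof. by move=> h /=; rewrite ifN // -ltnNge ltnS. Qed.

Lemma lin_sum (k : nat) (a f g : 'I_k -> R) (t : R) :
  \sum_(h < k) a h * (f h + t * g h) = \sum_(h < k) a h * f h + t * \sum_(h < k) a h * g h.
Proof.
rewrite mulr_sumr -big_split /=; apply: eq_bigr => h _; ring.
Qed.

Lemma lin_base l i k t A j p q :
  stop_from n W b x l (shift_pair A k i t) l (oplus p q) j
  = stop_from n W b x l A l (oplus p q) j + t * Fv l i (oplus p k) l j q.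
Proof.
rewrite !stop_from_le // F_base /shift_pair.
case: (j == i); case: p; case: q; case: k => /=; by rewrite ?mulr1 ?mulr0 ?addr0.
Qed.

Lemma lin l i k t A m : (l <= m <= L)%N -> forall j, (j < n m)%N -> forall p q,
  stop_from n W b x l (shift_pair A k i t) m (oplus p q) j
  = stop_from n W b x l A m (oplus p q) j + t * Fv l i (oplus p k) m j q.
Proof.
elim: m => [|m IH] /andP [hlm hmL] j hj p q.
  by move: hlm; rewrite leqn0 => /eqP ->; exact: lin_base.
case: (leqP l m) => hl; last first.
  have e : m.+1 = l by lia.
  by rewrite e lin_base.
have IH' : forall (h : 'I_(n m)) p q,
  stop_from n W b x l (shift_pair A k i t) m (oplus p q) h
  = stop_from n W b x l A m (oplus p q) h + t * Fv l i (oplus p k) m h q.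
  by move=> h; apply: IH; [apply/andP; split; lia | exact: ltn_ord].
rewrite !stop_from_S // /stop_step F_step //= negb_oplus.
under eq_bigr => h _ do rewrite IH'.
under [X in _ * (_ + X) = _]eq_bigr => h _ do rewrite IH'.
rewrite !lin_sum big_split /=.
ring.
Qed.

Lemma jacF l i m : (l <= m <= L)%N -> forall j, (j < n m)%N -> forall q,
  jac n W b x l m j i = xi q true * (Fv l i true m j q - Fv l i false m j q).
Proof.
elim: m => [|m IH] /andP [hlm hmL] j hj q.
  move: hlm; rewrite leqn0 => /eqP ->.
  rewrite jac_le // !F_base.
  by case: (j == i); case: q; rewrite /xi /=; ring.
case: (leqP l m) => hl; last first.
  have e : m.+1 = l by lia.
  rewrite jac_le ?e // !F_base.
  by case: (j == i); case: q; rewrite /xi /=; ring.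
have IH' : forall (h : 'I_(n m)) q,
  jac n W b x l m h i = xi q true * (Fv l i true m h q - Fv l i false m h q).
  by move=> h; apply: IH; [apply/andP; split; lia | exact: ltn_ord].
rewrite jac_S // !F_step //= -mulrBr -sumrB mulrCA [in RHS]mulr_sumr.
congr (_ * _); apply: eq_bigr => h _.
have hxi : - xi q true = xi (~~ q) true :> R by case: (q); rewrite /xi /= ?opprK.
have h1 := IH' h q; have h2 := IH' h (~~ q).
rewrite -[in LHS](sgpartB (W m.+1 j h : R)) /sgpart.
transitivity (ppart (W m.+1 j h) * (xi q true * (Fv l i true m h q - Fv l i false m h q))
   - npart (W m.+1 j h) * (- xi q true * (Fv l i true m h (~~ q) - Fv l i false m h (~~ q)))).
  by rewrite -h1 hxi -h2 mulrBl.
ring.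
Qed.

End Proof.

Theorem mainTheorem6 (R : realType) (L : nat) (n : nat -> nat)
  (W : nat -> nat -> nat -> R) (b : nat -> nat -> R) (x : nat -> R)
  (hgam : forall l i : nat, (1 <= l <= L)%N -> (i < n l)%N -> 0 < gam n W l i)
  (m j : nat) (q : bool) (hm : (1 <= m <= L)%N) (hj : (j < n m)%N) :
  let u : state := Some (m, j, q) in
  forall (l i : nat) (p k : bool), (l <= m)%N -> (i < n l)%N ->
    is_derive (0 : R) (1 : R)
      (fun t : R =>
         stop_from n W b x l (shift_pair (a_stop n W b x l) k i t) m (oplus p q) j)
      (Gamma L n W b x u (Some (l, i, oplus p k)))
    /\
    jac n W b x l m j i
      = xi q true * (Gamma L n W b x u (Some (l, i, true))
                     - Gamma L n W b x u (Some (l, i, false))).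
Proof.
move=> u l i p k hlm hi.
have hlmL : (l <= m <= L)%N by move: hm => /andP [_ h]; rewrite hlm.
split.
  have -> : (fun t : R =>
         stop_from n W b x l (shift_pair (a_stop n W b x l) k i t) m (oplus p q) j)
    = (fun t => stop_from n W b x l (a_stop n W b x l) m (oplus p q) j
                + t * @Fv R L n W b x l i (oplus p k) m j q).
    by apply/funext => t; exact: (@lin R L n W b x hgam l i k t (a_stop n W b x l) m hlmL j hj p q).
  have := @aff_derive R (stop_from n W b x l (a_stop n W b x l) m (oplus p q) j)
    (@Fv R L n W b x l i (oplus p k) m j q).
  by rewrite /Fv.
exact: (@jacF R L n W b x hgam l i m hlmL j hj q).
Qed.
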